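(* Let $F=F(N,\mathcal D)$ be a connected GSC, $x\in F$, $n\ge1$, and let $\omega,\tau\in\mathcal D^n\setminus\Omega_n(x)$ be well separated by $x$. Then $\varphi_\omega(F)$ and $\varphi_\tau(F)$ lie in different connected components of $F\setminus\{x\}$; in particular $x$ is a cut point of $F$.
   Context: GSC: $N\ge2$, $\mathcal D\subset\{0,\dots,N-1\}^2$ with $1<|\mathcal D|<N^2$, $\varphi_i(x)=\frac1N(x+i)$, $F$ the attractor $F=\bigcup_{i\in\mathcal D}\varphi_i(F)$; $\varphi_{i_1\cdots i_k}=\varphi_{i_1}\circ\cdots\circ\varphi_{i_k}$. For $x\in F$ and $k\ge1$: $\Omega_k(x)=\{\mathbf i\in\mathcal D^k: x\in\varphi_{\mathbf i}(F)\}$ and $E_k(x)=\bigcup_{\mathbf j\in\mathcal D^k\setminus\Omega_k(x)}\varphi_{\mathbf j}(F)$. Two words $\omega,\tau\in\mathcal D^n\setminus\Omega_n(x)$ are well separated by $x$ if for every $p\ge1$ the sets $\varphi_\omega(F)$ and $\varphi_\tau(F)$ lie in different connected components of $E_{n+p}(x)$. *)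

(* Defs.v *)
From HB Require Import structures.
From mathcomp Require Import all_boot all_order all_algebra.
From mathcomp Require Import all_classical all_reals all_analysis.
Set Implicit Arguments. Unset Strict Implicit. Unset Printing Implicit Defensive.
Import Order.TTheory GRing.Theory Num.Theory.
Import numFieldNormedType.Exports.
Local Open Scope classical_set_scope.
Local Open Scope ring_scope.

Definition gsc_phi (R : realType) (N : nat) (i : 'I_N * 'I_N) (p : R * R) : R * R :=
  ((p.1 + (i.1 : nat)%:R) / N%:R, (p.2 + (i.2 : nat)%:R) / N%:R).

Fixpoint gsc_phiw (R : realType) (N : nat) (w : seq ('I_N * 'I_N)) (p : R * R) : R * R :=
  match w with
  | [::] => p
  | i :: w' => gsc_phi i (gsc_phiw w' p)
  end.

Definition gsc_word (N : nat) (D : {set 'I_N * 'I_N}) (k : nat) (w : seq ('I_N * 'I_N)) : Prop :=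
  size w = k /\ all (fun i => i \in D) w.

(* F is the attractor of the IFS {phi_i : i in D}: the (unique, by Hutchinson)
   nonempty compact set with F = \bigcup_{i in D} phi_i(F). *)
Definition gsc_attractor (R : realType) (N : nat) (D : {set 'I_N * 'I_N}) (F : set (R * R)) : Prop :=
  F !=set0 /\ compact F /\ F = \bigcup_(i in [set i | i \in D]) (gsc_phi i @` F).

Definition gsc_Omega (R : realType) (N : nat) (D : {set 'I_N * 'I_N}) (F : set (R * R))
  (k : nat) (x : R * R) : set (seq ('I_N * 'I_N)) :=
  [set w | gsc_word D k w /\ (gsc_phiw w @` F) x].

Definition gsc_E (R : realType) (N : nat) (D : {set 'I_N * 'I_N}) (F : set (R * R))
  (k : nat) (x : R * R) : set (R * R) :=
  \bigcup_(w in [set w | gsc_word D k w /\ ~ gsc_Omega D F k x w]) (gsc_phiw w @` F).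

Definition in_different_components (T : topologicalType) (E A B : set T) : Prop :=
  exists y z, [/\ A y, B z, A `<=` connected_component E y,
                  B `<=` connected_component E z &
                  connected_component E y <> connected_component E z].

Definition well_separated (R : realType) (N : nat) (D : {set 'I_N * 'I_N}) (F : set (R * R))
  (x : R * R) (n : nat) (om ta : seq ('I_N * 'I_N)) : Prop :=
  [/\ gsc_word D n om, ~ gsc_Omega D F n x om,
      gsc_word D n ta, ~ gsc_Omega D F n x ta &
      forall p : nat, (1 <= p)%N ->
        in_different_components (gsc_E D F (n + p) x)
          (gsc_phiw om @` F) (gsc_phiw ta @` F)].

(* Main.v *)
Set Warnings "-all".
Require Import Defs.
From HB Require Import structures.
From mathcomp Require Import all_boot all_order all_algebra.
From mathcomp Require Import all_classical all_reals all_analysis.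
From mathcomp Require Import ring lra zify.
Import Order.TTheory GRing.Theory Num.Theory.
Import numFieldNormedType.Exports.
Local Open Scope classical_set_scope.
Local Open Scope ring_scope.

Lemma phi_cont (R : realType) N (i : 'I_N * 'I_N) : continuous (@gsc_phi R N i).
Proof.
have -> : @gsc_phi R N i = fun p => (N%:R^-1 : R) *: (p + ((i.1:nat)%:R, (i.2:nat)%:R)).
  by apply: funext => p; rewrite /gsc_phi; congr pair => /=; rewrite mulrC.
move=> p; apply: cvgZl_tmp; apply: cvgD; first exact: cvg_id.
exact: cvg_cst.
Qed.

Lemma phiw_cont (R : realType) N w : continuous (@gsc_phiw R N w).
Proof.
elim: w => [|i w IH] /=; first by move=> p; exact: cvg_id.
move=> p; apply: (continuous_comp (IH p)); exact: phi_cont.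
Qed.

Lemma bnd {R : realType} {F : set (R*R)} : compact F ->
  exists M : R, forall p, F p -> `|p.1| <= M /\ `|p.2| <= M.
Proof.
move=> /compact_bounded [M [_ HM]].
exists (M+1) => p Fp; have := HM (M+1) ltac:(by rewrite ltrDl ltr01) p Fp.
move=> H; have E := @prod_normE R R R p.
split; apply: le_trans H; rewrite /= E; by rewrite le_max lexx ?orbT.
Qed.

Lemma phiw_cat (R : realType) N (w s : seq ('I_N * 'I_N)) (p : R * R) :
  gsc_phiw (w ++ s) p = gsc_phiw w (gsc_phiw s p).
Proof. by elim: w => //= i w ->. Qed.

Lemma attr_phi {R : realType} {N} {D : {set 'I_N * 'I_N}} {F : set (R * R)} :
  gsc_attractor D F -> forall {i p}, i \in D -> F p -> F (gsc_phi i p).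
Proof. by move=> [_ [_ HF]] i p iD Fp; rewrite HF; exists i => //; exists p. Qed.

Lemma attr_inv {R : realType} {N} {D : {set 'I_N * 'I_N}} {F : set (R * R)} {c} :
  gsc_attractor D F -> F c -> exists i d, [/\ i \in D, F d & c = gsc_phi i d].
Proof. by move=> [_ [_ HF]]; rewrite {1}HF => -[i Di [d Fd <-]]; exists i, d. Qed.

Lemma cell_in {R : realType} {N} {D : {set 'I_N * 'I_N}} {F : set (R * R)} {w p} :
  gsc_attractor D F -> all (fun i => i \in D) w -> F p -> F (gsc_phiw w p).
Proof.
move=> HA; elim: w => [|i w IH] //= /andP[iD wD] Fp.
exact: (attr_phi HA iD (IH wD Fp)).
Qed.

Lemma cover {R : realType} {N} {D : {set 'I_N * 'I_N}} {F : set (R * R)} :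
  gsc_attractor D F -> forall j c, F c ->
  exists s d, [/\ gsc_word D j s, F d & c = gsc_phiw s d].
Proof.
move=> HA; elim=> [|j IH] c Fc; first by exists [::], c.
have [i [d [Di Fd ->]]] := attr_inv HA Fc.
have [s [e [[ss sa] Fe ->]]] := IH d Fd.
exists (i :: s), e; split => //; split; first by rewrite /= ss.
by rewrite /= Di sa.
Qed.

Lemma E_sub {R : realType} {N} {D : {set 'I_N * 'I_N}} {F : set (R * R)} {k x} :
  gsc_attractor D F -> gsc_E D F k x `<=` F `\ x.
Proof.
move=> HA b [w [wk nO] [c Fc <-]]; split; first exact: cell_in (wk.2) Fc.
by move=> bx; apply: nO; split => //; exists c.
Qed.

Lemma cellE {R : realType} {N} {D : {set 'I_N * 'I_N}} {F : set (R * R)} {k x w} :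
  gsc_attractor D F -> gsc_word D k w -> ~ (gsc_phiw w @` F) x ->
  forall j, (gsc_phiw w @` F) `<=` gsc_E D F (k + j) x.
Proof.
move=> HA [wk wa] nx j b [c Fc <-].
have [s [d [[ss sa] Fd ->]]] := cover HA j _ Fc.
exists (w ++ s).
  split; first by split; [rewrite size_cat wk ss | rewrite all_cat wa sa].
  move=> [_ [e Fe He]]; apply: nx; exists (gsc_phiw s e).
    exact: cell_in sa Fe.
  by rewrite -phiw_cat.
by exists d => //; rewrite phiw_cat.
Qed.

Lemma E_mono {R : realType} {N} {D : {set 'I_N * 'I_N}} {F : set (R * R)} {k k' x} :
  gsc_attractor D F -> (k <= k')%N -> gsc_E D F k x `<=` gsc_E D F k' x.
Proof.
move=> HA le b [w [wk nO] bc].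
have := cellE HA wk (fun h => nO (conj wk h)) (k' - k) _ bc.
by rewrite subnKC.
Qed.

Lemma phiw_diff1 (R : realType) N (w : seq ('I_N * 'I_N)) (p q : R * R) : (0 < N)%N ->
  (gsc_phiw w p).1 - (gsc_phiw w q).1 = (p.1 - q.1) / (N%:R ^+ size w).
Proof.
move=> N0; have nz : (N%:R : R) != 0 by rewrite pnatr_eq0 -lt0n.
elim: w => [|i w IH] /=; first by rewrite expr0 divr1.
rewrite /gsc_phi /= -[(gsc_phiw w p).1](subrK (gsc_phiw w q).1) IH exprS.
field; rewrite ?nz ?expf_neq0 //.
Qed.

Lemma phiw_diff2 (R : realType) N (w : seq ('I_N * 'I_N)) (p q : R * R) : (0 < N)%N ->
  (gsc_phiw w p).2 - (gsc_phiw w q).2 = (p.2 - q.2) / (N%:R ^+ size w).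
Proof.
move=> N0; have nz : (N%:R : R) != 0 by rewrite pnatr_eq0 -lt0n.
elim: w => [|i w IH] /=; first by rewrite expr0 divr1.
rewrite /gsc_phi /= -[(gsc_phiw w p).2](subrK (gsc_phiw w q).2) IH exprS.
field; rewrite ?nz ?expf_neq0 //.
Qed.

Lemma sep_level {R : realType} {N} {D : {set 'I_N * 'I_N}} {F : set (R * R)} x y :
  (2 <= N)%N -> gsc_attractor D F -> F y -> y <> x ->
  exists m, forall w : seq ('I_N * 'I_N), (m <= size w)%N -> (gsc_phiw w @` F) y -> ~ (gsc_phiw w @` F) x.
Proof.
move=> N2 [_ [cF _]] Fy yx.
have [M HM] := bnd cF.
have d0 : 0 < `|y.1 - x.1| + `|y.2 - x.2|.
  rewrite lt_def addr_ge0 // andbT; apply/negP => /eqP.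
  move/eqP; rewrite paddr_eq0 // !normr_eq0 !subr_eq0 => /andP[/eqP h1 /eqP h2].
  by apply: yx; move: h1 h2; clear; case: y => a b /= -> ->; case: x.
set d := `|y.1 - x.1| + `|y.2 - x.2| in d0 *.
exists (Num.trunc (4 * M / d)).+1 => w hm [p Fp ep] [q Fq eq].
have N0 : (0 < N)%N by apply: leq_trans N2.
set K : R := N%:R ^+ size w.
have K0 : 0 < K by rewrite exprn_gt0 // ltr0n.
have hK : 4 * M / d < K.
  apply: (lt_le_trans (truncnS_gt _)); rewrite /K -natrX ler_nat.
  exact: leq_trans hm (ltnW (ltn_expl _ N2)).
have e1 : `|y.1 - x.1| * K = `|p.1 - q.1|.
  rewrite -ep -eq phiw_diff1 // normrM normfV (ger0_norm (ltW K0)) mulfVK //.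
  by rewrite gt_eqF.
have e2 : `|y.2 - x.2| * K = `|p.2 - q.2|.
  rewrite -ep -eq phiw_diff2 // normrM normfV (ger0_norm (ltW K0)) mulfVK //.
  by rewrite gt_eqF.
have [hp1 hp2] := HM p Fp; have [hq1 hq2] := HM q Fq.
have b1 := ler_normB p.1 q.1; have b2 := ler_normB p.2 q.2.
have h4 : 4 * M < K * d by rewrite -ltr_pdivrMr.
have h5 : K * d = `|p.1 - q.1| + `|p.2 - q.2| by rewrite mulrC /d mulrDl e1 e2.
rewrite h5 in h4; move: h4 b1 b2 hp1 hp2 hq1 hq2.
move: `|p.1 - q.1| `|p.2 - q.2| `|p.1| `|p.2| `|q.1| `|q.2| => a1 a2 a3 a4 a5 a6.
clear; lra.
Qed.

Lemma words_finite (T : finType) k : finite_set [set w : seq T | size w = k].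
Proof.
apply: (@sub_finite_set _ _ ((fun t : k.-tuple T => tval t) @` setT)).
  by move=> w /= hw; exists (Tuple (introT eqP hw)).
by apply: finite_image; exact: finite_finset.
Qed.

Lemma cells_closed {R : realType} {N} {D : {set 'I_N * 'I_N}} {F : set (R * R)} k
  (P : seq ('I_N * 'I_N) -> Prop) : compact F ->
  closed (\bigcup_(w in [set w | gsc_word D k w /\ P w]) (gsc_phiw w @` F)).
Proof.
move=> cF; apply: closed_bigcup.
  by apply: sub_finite_set (words_finite _ k) => w [[]].
move=> w _; apply: compact_closed; first exact: norm_hausdorff.
apply: continuous_compact => //; exact: continuous_subspaceT (phiw_cont _ _ _).
Qed.

Lemma nbhd {R : realType} {N} {D : {set 'I_N * 'I_N}} {F : set (R * R)} k y :
  gsc_attractor D F -> F y -> exists V : set (R * R), [/\ open V, V y &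
  forall a, F a -> V a -> exists w, [/\ gsc_word D k w, (gsc_phiw w @` F) a & (gsc_phiw w @` F) y]].
Proof.
move=> HA Fy; have cF := HA.2.1.
exists (~` \bigcup_(w in [set w | gsc_word D k w /\ ~ (gsc_phiw w @` F) y]) (gsc_phiw w @` F)); split.
- by rewrite openC; apply: cells_closed.
- by rewrite /setC /=; move=> [w [_ ny] hy].
- move=> a Fa; have [s [d [ws Fd ->]]] := cover HA k _ Fa; move=> Va.
  exists s; split => //.
  apply: contrapT => ny; move: Va; rewrite /setC /=; apply; exists s; first by split.
by exists d.
Qed.

Theorem mainTheorem16 (R : realType) (N : nat) (D : {set 'I_N * 'I_N})
  (F : set (R * R)) (x : R * R) (n : nat) (om ta : seq ('I_N * 'I_N)) :
  (2 <= N)%N -> (1 < #|D|)%N -> (#|D| < N ^ 2)%N ->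
  gsc_attractor D F -> connected F ->
  F x -> (1 <= n)%N ->
  well_separated D F x n om ta ->
  in_different_components (F `\ x) (gsc_phiw om @` F) (gsc_phiw ta @` F)
  /\ ~ connected (F `\ x).
Proof.
move=> N2 _ _ HA cF Fx n1 [omw nOo taw nOt WS].
have [[y0 Fy0] [cpt HF]] := HA.
set S := F `\ x.
set Wo := gsc_phiw om @` F; set Wt := gsc_phiw ta @` F.
have nxo : ~ Wo x := fun h => nOo (conj omw h).
have nxt : ~ Wt x := fun h => nOt (conj taw h).
have cW : forall w : seq ('I_N * 'I_N), connected (gsc_phiw w @` F).
  move=> w; apply: connected_continuous_connected cF _.
  exact: continuous_subspaceT (phiw_cont _ _ _).
set A := [set a | exists k K, [/\ connected K, K `<=` gsc_E D F k x, K `&` Wo !=set0 & K a]].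
have AS : A `<=` S by move=> a [k [K [_ KE _ Ka]]]; exact: E_sub HA _ (KE _ Ka).
have trans : forall m w u v, gsc_word D m w -> ~ (gsc_phiw w @` F) x ->
    (gsc_phiw w @` F) u -> (gsc_phiw w @` F) v -> A u -> A v.
  move=> m w u v wm nx wu wv [k [K [cK KE [z [Kz Woz]] Ku]]].
  exists (maxn k m), (K `|` gsc_phiw w @` F); split.
  - by apply: connectedU; [exists u; split | exact: cK | exact: cW].
  - move=> b [Kb|Wb]; first exact: E_mono HA (leq_maxl k m) _ (KE _ Kb).
    by have := cellE HA wm nx (maxn k m - m) _ Wb; rewrite subnKC // leq_maxr.
  - by exists z; split => //; left.
  - by right.
have loc : forall y, S y -> exists V, [/\ open V, V y &
    forall a, S a -> V a -> (A a <-> A y)].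
  move=> y [Fy yx]; have [m Hm] := sep_level x y N2 HA Fy yx.
  have [V [oV Vy HV]] := nbhd m y HA Fy; exists V; split => // a [Fa _] Va.
  have [w [wm wa wy]] := HV a Fa Va.
  have nx : ~ (gsc_phiw w @` F) x by apply: Hm wy; rewrite wm.1.
  by split; [exact: trans wm nx wa wy | exact: trans wm nx wy wa].
set C1 := \bigcup_(V in [set V | open V /\ S `&` V `<=` A]) V.
set C2 := ~` \bigcup_(V in [set V | open V /\ S `&` V `<=` ~` A]) V.
have oC1 : open C1 by apply: bigcup_open => V [].
have cC2 : closed C2 by rewrite /C2 closedC; apply: bigcup_open => V [].
have AC1 : A = S `&` C1.
  apply/seteqP; split.
  - move=> a Aa; split; first exact: AS.
    have [V [oV Va HV]] := loc a (AS a Aa); exists V => //; split => // b [Sb Vb].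
    exact: (HV b Sb Vb).2.
  - by move=> a [Sa [V [_ HV] Va]]; exact: HV.
have AC2 : A = S `&` C2.
  apply/seteqP; split.
  - move=> a Aa; split; first exact: AS.
    rewrite /C2 /setC /=; move=> [V [_ HV] Va]; exact: (HV a (conj (AS a Aa) Va)) Aa.
  - move=> a [Sa nU]; apply: contrapT => nAa; apply: nU.
    have [V [oV Va HV]] := loc a Sa; exists V => //; split => // b [Sb Vb] Ab.
    by apply: nAa; exact: (HV b Sb Vb).1.
have sepA : forall K, connected K -> K `<=` S -> K `&` A !=set0 -> K `<=` A.
  move=> K cK KS KA.
  have e1 : K `&` A = K `&` C1 by rewrite AC1 setIA (setIidl KS).
  have e2 : K `&` A = K `&` C2 by rewrite AC2 setIA (setIidl KS).
  have h := cK (K `&` A) KA (ex_intro2 _ _ C1 oC1 e1) (ex_intro2 _ _ C2 cC2 e2).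
  move=> b Kb; have : (K `&` A) b by rewrite h.
  by case.
have EWo : Wo `<=` gsc_E D F (n + 1) x := cellE HA omw nxo 1.
have WoA : Wo `<=` A.
  move=> a Woa; exists (n + 1), Wo; split => //; [exact: cW | by exists a].
have WtA : forall a, Wt a -> ~ A a.
  move=> a Wta [k [K [cK KE [z [Kz Woz]] Ka]]].
  set q := (maxn k (n + 1) - n)%N.
  have q1 : (1 <= q)%N by rewrite /q; lia.
  have nq : (n + q = maxn k (n + 1))%N by rewrite /q; lia.
  have := WS q q1; rewrite /in_different_components => -[yy [zz [Woy Wtz ccy ccz neq]]].
  set E := gsc_E D F (n + q) x.
  have KE' : K `<=` E.
    by move=> b Kb; rewrite /E nq; exact: E_mono HA (leq_maxl _ _) _ (KE _ Kb).
  have WtE : Wt `<=` E := cellE HA taw nxt q.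
  have WoE : Wo `<=` E.
    by move=> b Wb; rewrite /E nq; exact: E_mono HA (leq_maxr _ _) _ (EWo _ Wb).
  set U := (K `|` Wt) `|` Wo.
  have cU : connected U.
    rewrite /U; apply: connectedU; first by exists z; split; [left|].
      by apply: connectedU; [exists a; split | | exact: cW].
    exact: cW.
  have UE : U `<=` E by move=> b [[Kb|Wb]|Wb]; auto.
  have := connected_component_max (or_intror Woy : U yy) UE cU.
  move=> /(_ zz (or_introl (or_intror Wtz))) ccyz.
  by apply: neq; exact: same_connected_component ccyz.
have [y1 Woy1] : Wo !=set0 by exists (gsc_phiw om y0); exists y0.
have [z1 Wtz1] : Wt !=set0 by exists (gsc_phiw ta y0); exists y0.
have WoS : Wo `<=` S := fun b h => E_sub HA _ (EWo b h).
have WtS : Wt `<=` S := fun b h => E_sub HA _ (cellE HA taw nxt 1 b h).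
split.
- exists y1, z1; split => //.
  + exact: connected_component_max Woy1 WoS (cW om).
  + exact: connected_component_max Wtz1 WtS (cW ta).
  + move=> eq; have ccA : connected_component S y1 `<=` A.
      apply: sepA; [exact: component_connected | exact: connected_component_sub |].
      exists y1; split; [exact: connected_component_refl (WoS _ Woy1) | exact: WoA].
    apply: (WtA z1 Wtz1); apply: ccA; rewrite eq.
    exact: connected_component_refl (WtS _ Wtz1).
- move=> cS; have := sepA S cS (@subset_refl _ S).
  move=> /(_ (ex_intro _ y1 (conj (WoS _ Woy1) (WoA _ Woy1)))).
  move=> /(_ z1 (WtS _ Wtz1)); exact: WtA z1 Wtz1.
Qed.
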